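(* Let $\mathbb K\in\{\mathbb R,\mathbb C\}$ and let $(g(x))_{x\ge0}$ be a semigroup of invertible linear maps on $\mathbb K^d$. For each $x\ge0$ let $g(x)=D(x)T(x)$ be the multiplicative Jordan–Chevalley decomposition of $g(x)$. Then $(D(x))_{x\ge0}$ and $(T(x))_{x\ge0}$ are each semigroups, and $T(x)D(y)=D(y)T(x)$ for all $x,y\ge0$.
   Context: A semigroup is a map $g:[0,\infty)\to L(\mathbb K^d)$ with $g(0)=\mathrm{id}$ and $g(x+y)=g(x)g(y)$ for all $x,y\ge0$. The multiplicative Jordan–Chevalley decomposition of an invertible linear map $A$ on $\mathbb K^d$ is the unique factorization $A=DT$ with $D$ diagonalizable (over $\mathbb C$), $T$ unipotent (i.e. $T-\mathrm{id}$ nilpotent), and $DT=TD$. *)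

(* Defs.v *)
From mathcomp Require Import all_boot all_order all_algebra.
From mathcomp Require Import complex.
From mathcomp Require Import reals.
Set Implicit Arguments. Unset Strict Implicit. Unset Printing Implicit Defensive.
Import Order.TTheory GRing.Theory Num.Theory.
Local Open Scope ring_scope.

(* k-th power of a square matrix (works for every size d, including d = 0). *)
Definition mxpow (K : pzRingType) (d : nat) (A : 'M[K]_d) (k : nat) : 'M[K]_d :=
  iter k (mulmx A) 1%:M.

Definition mx_nilpotent (K : pzRingType) (d : nat) (N : 'M[K]_d) : Prop :=
  exists k : nat, mxpow N k = 0.

Definition mx_unipotent (K : pzRingType) (d : nat) (T : 'M[K]_d) : Prop :=
  mx_nilpotent (T - 1%:M).

(* g : [0,oo) -> L(K^d) is a semigroup: g 0 = id, g (x+y) = g x g y for x,y >= 0.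
   (g is given as a function on all of R; only its values on [0,oo) matter.) *)
Definition mx_semigroup (R : realType) (K : pzRingType) (d : nat)
  (g : R -> 'M[K]_d) : Prop :=
  g 0 = 1%:M /\
  (forall x y : R, 0 <= x -> 0 <= y -> g (x + y) = g x *m g y).

(* A = D T is the multiplicative Jordan-Chevalley decomposition of A:
   D diagonalizable over C (after embedding the scalars K into C via toC),
   T unipotent, D T = T D. *)
Definition mult_JC_decomp (R : rcfType) (K : fieldType) (toC : K -> R[i])
  (d : nat) (A D T : 'M[K]_d) : Prop :=
  [/\ diagonalizable (map_mx toC D), mx_unipotent T,
      A = D *m T & D *m T = T *m D].

(* Main.v *)
Require Import Defs.
From mathcomp Require Import all_boot all_order all_algebra.
From mathcomp Require Import complex.
From mathcomp Require Import reals.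
From mathcomp Require Import ring zify.
Import Order.TTheory GRing.Theory Num.Theory.
Local Open Scope ring_scope.
Set Implicit Arguments. Unset Strict Implicit. Unset Printing Implicit Defensive.

Section Core.
Variables (L : fieldType) (n' : nat).
Local Notation n := n'.+1.
Local Notation S := {poly {poly L}}.

Definition ev (r : {poly L}) (s : S) : S :=
  (map_poly polyC (map_poly polyC r)).[s].

Lemma evD r1 r2 s : ev (r1 + r2) s = ev r1 s + ev r2 s.
Proof. by rewrite /ev !rmorphD /= hornerD. Qed.
Lemma evM r1 r2 s : ev (r1 * r2) s = ev r1 s * ev r2 s.
Proof. by rewrite /ev !rmorphM /= hornerM. Qed.
Lemma evX s : ev 'X s = s.
Proof. by rewrite /ev !map_polyX hornerX. Qed.
Lemma evC c s : ev c%:P s = (c%:P)%:P.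
Proof. by rewrite /ev !map_polyC hornerC. Qed.

Definition aa : S := ('X)%:P + ('X)%:P * 'X.

Lemma ev_split r : exists q : S, ev r aa = r%:P + q * 'X.
Proof.
elim/poly_ind: r => [|p c [q IH]].
  by exists 0; rewrite /ev !rmorph0 horner0 mul0r addr0.
exists (q * ('X)%:P + q * ('X)%:P * 'X + p%:P * ('X)%:P).
rewrite evD evM evX evC IH /aa !rmorphD !rmorphM /=.
ring.
Qed.

Lemma ev_pow r m : exists s t : S, ev r aa ^+ m = r%:P * s + t * 'X ^+ m.
Proof.
have [q ->] := ev_split r.
exists (\sum_(i < m) (r%:P + q * 'X) ^+ (m.-1 - i) * (q * 'X) ^+ i), (q ^+ m).
rewrite -exprMn -(subrK ((q * 'X) ^+ m) ((r%:P + q * 'X) ^+ m)) subrXX.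
by congr (_ * _ + _); rewrite addrK.
Qed.

End Core.


Section Core2.
Variables (L : fieldType) (n' : nat).
Local Notation n := n'.+1.
Local Notation S := {poly {poly L}}.
Variables (D N : 'M[L]_n) (m : nat).
Hypothesis DN : D * N = N * D.
Hypothesis Nm : N ^+ m = 0.

Let cfu : commr_rmorph (horner_mx D) N.
Proof. by move=> p; apply: comm_mx_horner. Qed.

Local Notation phi := (horner_morph cfu).

Local Notation A := (D + D * N).

Lemma phi_ev r : phi (ev r (aa L)) = horner_mx A r.
Proof.
elim/poly_ind: r => [|p c IH].
  by rewrite /ev !rmorph0 horner0 rmorph0.
rewrite evD evM evX evC !rmorphD !rmorphM /= IH /aa !rmorphD !rmorphM /=.
rewrite !horner_morphC horner_morphX.
have hX : horner_mx D 'X = D := horner_mx_X D.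
have hC : horner_mx D c%:P = c%:M := horner_mx_C D c.
rewrite /= hX hC.
by rewrite horner_mx_X horner_mx_C.
Qed.

Lemma keyM r : exists W, horner_mx A r ^+ m = horner_mx D r * W.
Proof.
have [s [t E]] := ev_pow r m.
exists (phi s); rewrite -phi_ev -rmorphXn E rmorphD !rmorphM rmorphXn /=.
by rewrite horner_morphX Nm mulr0 addr0 horner_morphC.
Qed.


Lemma hM (M : 'M[L]_n) p q : horner_mx M (p * q) = horner_mx M p * horner_mx M q.
Proof. exact: rmorphM. Qed.
Lemma hXn (M : 'M[L]_n) p k : horner_mx M (p ^+ k) = horner_mx M p ^+ k.
Proof. exact: rmorphXn. Qed.
Lemma hDD (M : 'M[L]_n) p q : horner_mx M (p + q) = horner_mx M p + horner_mx M q.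
Proof. exact: rmorphD. Qed.
Lemma hBB (M : 'M[L]_n) p q : horner_mx M (p - q) = horner_mx M p - horner_mx M q.
Proof. exact: rmorphB. Qed.
Lemma h1 (M : 'M[L]_n) : horner_mx M 1 = 1.
Proof. exact: rmorph1. Qed.

Hypothesis hD : exists2 P : 'M_n, P \in unitmx & similar_diag P D.
Variable B : 'M[L]_n.
Hypothesis BA : B * A = A * B.

Lemma JCcomm : B * D = D * B.
Proof.
have [rs urs hdiv] := (diagonalizableP D).1 hD.
set p := \prod_(x <- rs) ('X - x%:P) in hdiv.
have hDp : horner_mx D p = 0.
  by have [k ->] := dvdpP _ _ hdiv; rewrite hM mx_root_minpoly mulr0.
have cAD0 : comm_mx A D.
  by rewrite /comm_mx !mulmxE mulrDl mulrDr -mulrA DN mulrA.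
have cDA r1 r2 : horner_mx D r1 * horner_mx A r2 = horner_mx A r2 * horner_mx D r1.
  apply/esym/comm_horner_mx/comm_mx_horner; exact: cAD0.
have cBA r : B * horner_mx A r = horner_mx A r * B.
  exact: comm_mx_horner.
set C := B * D - D * B.
have step : forall x, x \in rs -> exists u, C * horner_mx A (u * ('X - x%:P)^+m) = C.
  move=> x xrs.
  set q := \prod_(y <- rs | y != x) ('X - y%:P).
  have pq : p = ('X - x%:P) * q by rewrite /p (bigD1_seq x).
  have cop : coprimep (('X - x%:P)^+m) (q^+m).
    apply: coprimep_expl; apply: coprimep_expr.
    rewrite coprimep_sym coprimep_XsubC /root horner_prod prodf_seq_neq0.
    apply/allP => y _; apply/implyP => hy.
    by rewrite hornerXsubC subr_eq0 eq_sym.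
  have [[u w] /= bz] := Bezout_eq1_coprimepP _ _ cop.
  exists u.
  set E := horner_mx A (w * q^+m).
  have hE : D * E = x%:M * E.
    have [W hW] := keyM q.
    apply/eqP; rewrite -subr_eq0 -mulrBl.
    have -> : D - x%:M = horner_mx D ('X - x%:P).
      by rewrite hBB horner_mx_X horner_mx_C.
    rewrite /E hM hXn hW !mulrA cDA -(mulrA (horner_mx A w)) -hM -pq hDp.

    by rewrite mulr0 mul0r.
  have CE : C * E = 0.
    have cBE : B * E = E * B := cBA _.
    rewrite /C mulrBl -!mulrA hE cBE !mulrA hE.
    have sc : B * x%:M = x%:M * B := scalar_mxC x B.
    by rewrite sc -mulrA cBE mulrA subrr.
  have := congr1 (fun P => C * horner_mx A P) bz.
  by rewrite /= h1 mulr1 hDD mulrDr -/E CE addr0.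
have ind : forall s, {subset s <= rs} ->
    exists G, C * horner_mx A (G * \prod_(y <- s) ('X - y%:P)^+m) = C.
  elim=> [|x s IH] sub.
    by exists 1; rewrite big_nil mulr1 h1 mulr1.
  have sub' : {subset s <= rs} by move=> y ys; apply: sub; rewrite inE ys orbT.
  have [G hG] := IH sub'.
  have [u hu] := step x (sub x (mem_head x s)).
  exists (u * G); rewrite big_cons.
  have -> : u * G * (('X - x%:P) ^+ m * \prod_(y <- s) ('X - y%:P) ^+ m) =
     (u * ('X - x%:P)^+m) * (G * \prod_(y <- s) ('X - y%:P) ^+ m) by ring.
  by rewrite hM mulrA hu hG.
have [G hG] := ind rs (fun y h => h).
rewrite prodrXl -/p hM hXn in hG.
have [W hW] := keyM p.
rewrite hW hDp mul0r mulr0 in hG.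
rewrite mulr0 in hG.
by apply/eqP; rewrite -subr_eq0 -/C -hG.
Qed.

End Core2.


Section Nil.
Variable R : pzRingType.
Lemma nilD (x y : R) a b : GRing.comm x y -> x ^+ a = 0 -> y ^+ b = 0 ->
  (x + y) ^+ (a + b) = 0.
Proof.
move=> cxy xa yb; rewrite exprDn_comm // big1 // => i _.
have [h|h] := leqP a (a + b - i).
  by rewrite -(subnKC h) exprD xa !mul0r mul0rn.
have hb : (b <= i)%N by have := ltn_ord i; lia.
by rewrite -(subnKC hb) exprD yb mul0r mulr0 mul0rn.
Qed.
Lemma nilM (x y : R) a : GRing.comm y x -> x ^+ a = 0 -> (y * x) ^+ a = 0.
Proof. by move=> c xa; rewrite exprMn_comm // xa mulr0. Qed.
Lemma nilN (x : R) a : x ^+ a = 0 -> (- x) ^+ a = 0.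
Proof. by move=> xa; rewrite exprNn xa mulr0. Qed.
End Nil.

Section Diag.
Variables (L : fieldType) (n' : nat).
Local Notation n := n'.+1.

Lemma diagE (P M : 'M[L]_n) : P \in unitmx ->
  similar_diag P M <-> exists d, M = invmx P *m diag_mx d *m P.
Proof.
move=> Pu; split.
  by move/(similar_diagLR Pu) => [d ->]; exists d; rewrite conjumx ?unitmx_inv // invmxK.
move=> [d ->]; apply/(similar_diagLR Pu); exists d.
by rewrite conjumx ?unitmx_inv // invmxK.
Qed.

Lemma diag_sub_mul (M1 M2 : 'M[L]_n) : comm_mx M1 M2 ->
  diagonalizable M1 -> diagonalizable M2 ->
  diagonalizable (M1 - M2) /\ diagonalizable (M1 *m M2).
Proof.
move=> c d1 d2.
have [|P Pu /=] := (codiagonalizableP [:: M1; M2]).1.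
  split.
    move=> f g; rewrite !inE => /orP[]/eqP-> /orP[]/eqP->; rewrite /comm_mx //.
  by move=> f; rewrite !inE => /orP[]/eqP->.
rewrite andbT => /andP[h1 h2].
move/(diagE _ Pu): h1 => [e1 E1]; move/(diagE _ Pu): h2 => [e2 E2].
split; exists P => //; apply/(diagE _ Pu).
  exists (e1 - e2); rewrite E1 E2 linearB /=.
  by rewrite mulmxBr mulmxBl.
exists (\row_j (e1 0 j * e2 0 j)); rewrite E1 E2 -mulmx_diag.
by rewrite !mulmxA mulmxK.
Qed.

Lemma nil_diag0 (M : 'M[L]_n) k : diagonalizable M -> M ^+ k = 0 -> M = 0.
Proof.
case=> P Pu /(diagE _ Pu) [d ->] hk.
have : horner_mx (invmx P *m diag_mx d *m P) ('X^k) = 0.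
  by rewrite hXn horner_mx_X.
rewrite horner_mx_uconjC // horner_mx_diag.
move/(congr1 (fun X => P *m X *m invmx P)).
rewrite !mulmxA mulmxV // mul1mx mulmxK // mulmx0 mul0mx => hv.
have d0 : d = 0.
  apply/matrixP => i j; rewrite ord1 mxE.
  move/matrixP/(_ j j): hv.
  rewrite !mxE eqxx mulr1n hornerXn => /eqP.
  by rewrite expf_eq0 => /andP[_ /eqP].
by rewrite d0 linear0 mulmx0 mul0mx.
Qed.

End Diag.


Ltac csolve :=
  lazymatch goal with
  | |- GRing.comm (?a * ?b) ?c =>
      apply: commr_sym; apply: commrM; apply: commr_sym; csolve
  | |- GRing.comm (?a + ?b) ?c =>
      apply: commr_sym; apply: commrD; apply: commr_sym; csolve
  | |- GRing.comm (- ?a) ?c =>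
      apply: commr_sym; apply: commrN; apply: commr_sym; csolve
  | |- GRing.comm 1 ?c => apply: commr_sym; apply: commr1
  | |- GRing.comm 0 ?c => apply: commr_sym; apply: commr0
  | |- GRing.comm ?c (?a * ?b) => apply: commrM; csolve
  | |- GRing.comm ?c (?a + ?b) => apply: commrD; csolve
  | |- GRing.comm ?c (- ?a) => apply: commrN; csolve
  | |- GRing.comm ?c 1 => apply: commr1
  | |- GRing.comm ?c 0 => apply: commr0
  | _ => first [ assumption | (apply: commr_sym; assumption) | apply: commr_refl ]
  end.

Section Uniq.
Variables (L : fieldType) (n' : nat).
Local Notation n := n'.+1.

Lemma JCuniq (D1 T1 D2 T2 : 'M[L]_n) a b :
  diagonalizable D1 -> diagonalizable D2 -> (T1 - 1) ^+ a = 0 -> (T2 - 1) ^+ b = 0 ->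
  GRing.comm D1 D2 -> GRing.comm D1 T1 -> GRing.comm D1 T2 -> GRing.comm D2 T1 ->
  GRing.comm D2 T2 -> GRing.comm T1 T2 ->
  D1 * T1 = D2 * T2 -> D1 = D2.
Proof.
move=> d1 d2 n1 n2 c1 c2 c3 c4 c5 c6 E.
have [dM _] := diag_sub_mul c1 d1 d2.
apply/eqP; rewrite -subr_eq0; apply/eqP; apply: (nil_diag0 (k := (b + a)%N) dM).
have -> : D1 - D2 = D2 * (T2 - 1) + - (D1 * (T1 - 1)).
  rewrite mulrBr mulrBr !mulr1 E opprB [X in _ = X]addrC -addrA addKr.
  done.
apply: nilD.
- csolve.
- by apply: nilM => //; csolve.
- by apply: nilN; apply: nilM => //; csolve.
Qed.

End Uniq.


Section Main.
Variables (L : fieldType) (n' : nat).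
Local Notation n := n'.+1.

Lemma mainL (R : numDomainType) (g D T : R -> 'M[L]_n) :
  g 0 = 1 ->
  (forall x y, 0 <= x -> 0 <= y -> g (x + y) = g x * g y) ->
  (forall x, 0 <= x -> g x \in unitmx) ->
  (forall x, 0 <= x -> diagonalizable (D x)) ->
  (forall x, 0 <= x -> exists k, (T x - 1) ^+ k = 0) ->
  (forall x, 0 <= x -> g x = D x * T x) ->
  (forall x, 0 <= x -> GRing.comm (D x) (T x)) ->
  [/\ D 0 = 1, T 0 = 1,
      (forall x y, 0 <= x -> 0 <= y -> D (x + y) = D x * D y),
      (forall x y, 0 <= x -> 0 <= y -> T (x + y) = T x * T y) &
      (forall x y, 0 <= x -> 0 <= y -> GRing.comm (T x) (D y))].
Proof.
move=> H0 Hadd Hu Hd Hn Hg Hc.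
have cg x y : 0 <= x -> 0 <= y -> GRing.comm (g x) (g y).
  by move=> hx hy; rewrite /GRing.comm -!Hadd // addrC.
have JC' x B : 0 <= x -> GRing.comm B (g x) ->
    GRing.comm B (D x) /\ GRing.comm B (T x).
  move=> hx cB; have [k hk] := Hn x hx.
  have hc := Hc x hx.
  set N := T x - 1 in hk.
  have hT : T x = 1 + N by rewrite /N addrC subrK.
  have DN : D x * N = N * D x.
    have : GRing.comm (D x) N by rewrite /N; csolve.
    done.
  have gform : g x = D x + D x * N by rewrite Hg // hT mulrDr mulr1.
  have cBD : GRing.comm B (D x).
    apply: (@JCcomm _ _ (D x) N k DN hk (Hd x hx) B).
    by rewrite -gform.
  split=> //.
  have Du : D x \is a GRing.unit.
    by have := Hu x hx; rewrite Hg // unitmx_mul => /andP[].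
  apply: (mulrI Du).
  by rewrite mulrA -cBD -mulrA -Hg // cB Hg // -mulrA.
have cgD s t : 0 <= s -> 0 <= t -> GRing.comm (g s) (D t).
  by move=> hs ht; exact: (JC' t (g s) ht (cg s t hs ht)).1.
have cgT s t : 0 <= s -> 0 <= t -> GRing.comm (g s) (T t).
  by move=> hs ht; exact: (JC' t (g s) ht (cg s t hs ht)).2.
have cDD s t : 0 <= s -> 0 <= t -> GRing.comm (D s) (D t).
  by move=> hs ht; exact: (JC' t (D s) ht (commr_sym (cgD t s ht hs))).1.
have cDT s t : 0 <= s -> 0 <= t -> GRing.comm (D s) (T t).
  by move=> hs ht; exact: (JC' t (D s) ht (commr_sym (cgD t s ht hs))).2.
have cTT s t : 0 <= s -> 0 <= t -> GRing.comm (T s) (T t).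
  by move=> hs ht; exact: (JC' t (T s) ht (commr_sym (cgT t s ht hs))).2.
have cTD s t : 0 <= s -> 0 <= t -> GRing.comm (T s) (D t).
  by move=> hs ht; apply: commr_sym; apply: cDT.
have d1 : diagonalizable (1 : 'M[L]_n) by exact: (diagonalizable_scalar 1).
have h0 : (0 : R) <= 0 by [].
have D0 : D 0 = 1.
  have [k0 hk0] := Hn 0 h0.
  have f1 := cDT 0 0 h0 h0.
  apply: (@JCuniq _ _ (D 0) (T 0) 1 1 k0 1%N) => //; try csolve.
  - exact: Hd.
  - by rewrite subrr expr1.
  - by rewrite -Hg // H0 mulr1.
have T0 : T 0 = 1.
  by have := Hg 0 h0; rewrite H0 D0 mul1r.
have key x y : 0 <= x -> 0 <= y ->
    D (x + y) = D x * D y /\ g (x + y) = D x * D y * (T x * T y).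
  move=> hx hy; have hs : 0 <= x + y by rewrite addr_ge0.
  have [kx hkx] := Hn x hx; have [ky hky] := Hn y hy; have [ks hks] := Hn _ hs.
  have f1 := cDD x x hx hx.
  have f2 := cDT x x hx hx.
  have f3 := cTT x x hx hx.
  have f4 := cDD x y hx hy.
  have f5 := cDT x y hx hy.
  have f6 := cTT x y hx hy.
  have f7 := cDD x (x+y) hx hs.
  have f8 := cDT x (x+y) hx hs.
  have f9 := cTT x (x+y) hx hs.
  have f10 := cDD y x hy hx.
  have f11 := cDT y x hy hx.
  have f12 := cTT y x hy hx.
  have f13 := cDD y y hy hy.
  have f14 := cDT y y hy hy.
  have f15 := cTT y y hy hy.
  have f16 := cDD y (x+y) hy hs.
  have f17 := cDT y (x+y) hy hs.
  have f18 := cTT y (x+y) hy hs.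
  have f19 := cDD (x+y) x hs hx.
  have f20 := cDT (x+y) x hs hx.
  have f21 := cTT (x+y) x hs hx.
  have f22 := cDD (x+y) y hs hy.
  have f23 := cDT (x+y) y hs hy.
  have f24 := cTT (x+y) y hs hy.
  have f25 := cDD (x+y) (x+y) hs hs.
  have f26 := cDT (x+y) (x+y) hs hs.
  have f27 := cTT (x+y) (x+y) hs hs.
  have E : g (x + y) = D x * D y * (T x * T y).
    rewrite Hadd // !Hg // -!mulrA; congr (_ * _); rewrite !mulrA; congr (_ * _).
    exact: cTD.
  split=> //.
  apply: (@JCuniq _ _ (D (x + y)) (T (x + y)) (D x * D y) (T x * T y) ks (kx + ky)%N);
    try csolve.
  - exact: Hd.
  - exact: (diag_sub_mul (cDD x y hx hy) (Hd x hx) (Hd y hy)).2.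
  - have -> : T x * T y - 1 = (T x - 1) + T x * (T y - 1).
      by rewrite mulrBr mulr1 [RHS]addrC [RHS]addrA subrK.
    apply: nilD => //; first csolve.
    by apply: nilM => //; csolve.
  - by rewrite -Hg // E.
split => //.
- by move=> x y hx hy; have [] := key x y hx hy.
- move=> x y hx hy; have [E1 E2] := key x y hx hy.
  have hs : 0 <= x + y by rewrite addr_ge0.
  have Du : D (x + y) \is a GRing.unit.
    by have := Hu _ hs; rewrite Hg // unitmx_mul => /andP[].
  apply: (mulrI Du); rewrite -Hg // E2 E1.
  by rewrite mulrA.
Qed.

End Main.


Lemma mxpowE (K : pzRingType) n' (A : 'M[K]_n'.+1) k : mxpow A k = A ^+ k.
Proof.
elim: k => [|k IH] //.
by rewrite /mxpow iterS -/(mxpow A k) IH exprS.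
Qed.

Lemma map_mxXn (K : fieldType) (L : comUnitRingType) (f : {rmorphism K -> L})
   n' (A : 'M[K]_n'.+1) k : map_mx f (A ^+ k) = (map_mx f A) ^+ k.
Proof.
elim: k => [|k IH]; first exact: map_mx1.
by rewrite !exprS -IH; exact: map_mxM.
Qed.

Lemma transfer (R : realType) (K : fieldType) (C : rcfType)
  (f : {rmorphism K -> C[i]}) n' (g D T : R -> 'M[K]_n'.+1) :
     mx_semigroup g ->
     (forall x : R, 0 <= x -> g x \in unitmx) ->
     (forall x : R, 0 <= x -> mult_JC_decomp f (g x) (D x) (T x)) ->
     [/\ mx_semigroup D, mx_semigroup T &
         forall x y : R, 0 <= x -> 0 <= y -> T x *m D y = D y *m T x].
Proof.
move=> [H0 Hadd] Hu HJ.
pose g' x := map_mx f (g x); pose D' x := map_mx f (D x); pose T' x := map_mx f (T x).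
have := @mainL (C[i]) n' R g' D' T'.
case.
- by rewrite /g' H0; exact: map_mx1.
- by move=> x y hx hy; rewrite /g' Hadd //; exact: map_mxM.
- by move=> x hx; rewrite /g' map_unitmx; exact: Hu.
- by move=> x hx; have [] := HJ x hx.
- move=> x hx; have [_ [k hk] _ _] := HJ x hx; exists k.
  rewrite mxpowE in hk.
  have := congr1 (map_mx f) hk; rewrite map_mxXn map_mxB map_mx1 => ->.
  exact: map_mx0.
- move=> x hx; rewrite /g' /D' /T'; have [_ _ -> _] := HJ x hx; exact: map_mxM.
- move=> x hx; have [_ _ _ E] := HJ x hx.
  rewrite /GRing.comm /D' /T'.
  have e1 := map_mxM f (D x) (T x); have e2 := map_mxM f (T x) (D x).
  by rewrite -[_ * _]/(_ *m _) -e1 E e2.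
move=> D0 T0 DM TM cTD.
split.
- split.
    by apply: (@map_mx_inj _ _ f); rewrite map_mx1; exact: D0.
  move=> x y hx hy; apply: (@map_mx_inj _ _ f); rewrite map_mxM; exact: DM.
- split.
    by apply: (@map_mx_inj _ _ f); rewrite map_mx1; exact: T0.
  move=> x y hx hy; apply: (@map_mx_inj _ _ f); rewrite map_mxM; exact: TM.
- move=> x y hx hy; apply: (@map_mx_inj _ _ f); rewrite !map_mxM; exact: cTD.
Qed.

Unset Implicit Arguments.

Theorem mainTheorem7 (R : realType) (d : nat) :
  (forall g D T : R -> 'M[R]_d,
     mx_semigroup g ->
     (forall x : R, 0 <= x -> g x \in unitmx) ->
     (forall x : R, 0 <= x ->
        mult_JC_decomp (fun r : R => (r%:C)%C) (g x) (D x) (T x)) ->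
     [/\ mx_semigroup D, mx_semigroup T &
         forall x y : R, 0 <= x -> 0 <= y -> T x *m D y = D y *m T x])
  /\
  (forall g D T : R -> 'M[R[i]]_d,
     mx_semigroup g ->
     (forall x : R, 0 <= x -> g x \in unitmx) ->
     (forall x : R, 0 <= x ->
        mult_JC_decomp (fun z : R[i] => z) (g x) (D x) (T x)) ->
     [/\ mx_semigroup D, mx_semigroup T &
         forall x y : R, 0 <= x -> 0 <= y -> T x *m D y = D y *m T x]).
Proof.
case: d => [|n'].
  by split=> g D T _ _ _; do !split => *; apply/matrixP => -[].
split=> g D T Hs Hu HJ.
- exact: (@transfer R R R (real_complex R : {rmorphism R -> R[i]}) n' g D T Hs Hu HJ).
- exact: (@transfer R R[i] R (idfun : {rmorphism R[i] -> R[i]}) n' g D T Hs Hu HJ).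
Qed.
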